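(* Let $u\geq 1$ and $r\geq 2$ be integers. For every non-negative integer $n$, $\alpha_u^{(r)}(n)=\beta_u^{(r)}(n)$.
   Context: A partition of $n$ is a non-increasing finite sequence of positive integers (parts) summing to $n$. $\mathcal O(n;r,1)$ denotes the set of partitions of $n$ in which exactly one distinct part value is divisible by $r$ (this part may be repeated). $\mathcal O_u(n;r,1)$ is the set of $\lambda\in\mathcal O(n;r,1)$ such that the unique part value divisible by $r$ occurs exactly $u$ times. $\mathcal D(n;r,1)$ denotes the set of partitions of $n$ in which exactly one part value occurs at least $r$ times. $\mathcal D_u(n;r,1)$ is the set of $\lambda\in\mathcal D(n;r,1)$ such that the unique part value occurring at least $r$ times equals $u$. Set $\alpha_u^{(r)}(n)=|\mathcal O_u(n;r,1)|$ and $\beta_u^{(r)}(n)=|\mathcal D_u(n;r,1)|$. *)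

(* Defs.v *)
From mathcomp Require Import all_boot.
Set Implicit Arguments. Unset Strict Implicit. Unset Printing Implicit Defensive.

Definition is_partition (n : nat) (s : seq nat) : bool :=
  [&& sorted geq s, all (fun x => 0 < x) s & sumn s == n].

(* Every partition of n (length <= n,
   parts <= n) is represented exactly once, since [to_seq] is injective. *)
Definition bseq (n : nat) : finType := {k : 'I_n.+1 & k.-tuple 'I_n.+1}.

Definition to_seq (n : nat) (t : bseq n) : seq nat := map val (tagged t).

Definition npart (n : nat) (P : seq nat -> bool) : nat :=
  #|[pred t : bseq n | is_partition n (to_seq t) && P (to_seq t)]|.

Definition inO (r u : nat) (s : seq nat) : bool :=
  let D := undup [seq x <- s | r %| x] in
  (size D == 1) && (count_mem (head 0 D) s == u).

Definition inD (r u : nat) (s : seq nat) : bool :=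
  undup [seq x <- s | r <= count_mem x s] == [:: u].

Definition alpha (r u n : nat) : nat := npart n (inO r u).
Definition beta (r u n : nat) : nat := npart n (inD r u).

(* Main.v *)
Require Import Defs.
From mathcomp Require Import all_boot zify.
Set Implicit Arguments. Unset Strict Implicit. Unset Printing Implicit Defensive.

Definition of_seq (n : nat) (s : seq nat) : Defs.bseq n :=
  existT (fun k : 'I_n.+1 => k.-tuple 'I_n.+1) (inord (size s))
    [tuple (inord (nth 0 s i) : 'I_n.+1) | i < inord (size s)].

Lemma of_seqK n s : size s <= n -> all (fun x => x <= n) s -> to_seq (of_seq n s) = s.
Proof.
move=> Hs Ha; rewrite /to_seq /of_seq /=.
rewrite -map_comp.
have -> : [seq (val \o (fun i : 'I_(inord (size s) : 'I_n.+1) => (inord (nth 0 s i) : 'I_n.+1))) i | i <- enum 'I_(inord (size s) : 'I_n.+1)]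
   = [seq nth 0 s i | i <- map val (enum 'I_(inord (size s) : 'I_n.+1))].
  rewrite -map_comp; apply: eq_map => i /=; rewrite inordK //.
  have : i < size s by apply: (leq_trans (ltn_ord i)); rewrite inordK ?ltnS.
  by move/(mem_nth 0)/(allP Ha).
rewrite val_enum_ord inordK ?ltnS //; exact: (mkseq_nth 0 s).
Qed.

Lemma to_seq_inj n : injective (@to_seq n).
Proof.
move=> [k1 w1] [k2 w2]; rewrite /to_seq /= => E.
have Ek : k1 = k2 by apply: val_inj; have := congr1 size E; rewrite !size_map !size_tuple.
subst k2; have := inj_map val_inj E => /val_inj ->. by [].
Qed.

Lemma part_size n s : is_partition n s -> size s <= n.
Proof.
case/and3P=> _ Hp /eqP <-; elim: s Hp => //= x s IH /andP[Hx Hs].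
by rewrite -add1n leq_add // IH.
Qed.

Lemma part_elems n s : is_partition n s -> all (fun x => x <= n) s.
Proof.
case/and3P=> _ _ /eqP <-; apply/allP.
elim: s => //= x s IH y; rewrite inE => /orP[/eqP ->|/IH]; first exact: leq_addr.
by move=> H; apply: leq_trans H (leq_addl _ _).
Qed.

Lemma npart_leq n m (P Q : seq nat -> bool) (h : seq nat -> seq nat) :
  (forall s, is_partition n s -> P s -> is_partition m (h s) && Q (h s)) ->
  (forall s1 s2, is_partition n s1 -> P s1 -> is_partition n s2 -> P s2 -> h s1 = h s2 -> s1 = s2) ->
  npart n P <= npart m Q.
Proof.
move=> Hmap Hinj; rewrite /npart.
set A := [pred t : Defs.bseq n | _]; set B := [pred t : Defs.bseq m | _].
pose f (t : Defs.bseq n) : Defs.bseq m := of_seq m (h (to_seq t)).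
have fK t : t \in A -> to_seq (f t) = h (to_seq t).
  rewrite inE => /andP[Hp HP]; have /andP[Hq _] := Hmap _ Hp HP.
  by rewrite of_seqK // ?(part_size Hq) ?(part_elems Hq).
rewrite -(@card_in_imset _ _ f A); last first.
  move=> t1 t2 H1 H2 E; apply: to_seq_inj.
  move: (H1) (H2); rewrite !inE => /andP[Hp1 HP1] /andP[Hp2 HP2].
  by apply: Hinj => //; rewrite -fK // -[RHS]fK // E.
apply: subset_leq_card; apply/subsetP => _ /imsetP[t Ht ->].
rewrite inE fK //; move: Ht; rewrite inE => /andP[Hp HP]; exact: Hmap.
Qed.

Lemma count_mem_filter (p : pred nat) x s :
  count_mem x (filter p s) = if p x then count_mem x s else 0.
Proof.
rewrite count_filter; case Hp: (p x).
  by apply: eq_count => y /=; case: eqP => // ->; rewrite Hp.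
by apply/eqP; rewrite -leqn0 -(count_pred0 s); apply: sub_count => y /=; case: eqP => // ->; rewrite Hp.
Qed.

Lemma pos_count0 s : all (fun x => 0 < x) s = (count_mem 0 s == 0).
Proof. by elim: s => //= x s ->; case: x. Qed.

Lemma eq_part s1 s2 : sorted geq s1 -> sorted geq s2 ->
  (forall x, count_mem x s1 = count_mem x s2) -> s1 = s2.
Proof.
move=> H1 H2 Hc; apply: (@sorted_eq _ geq _ _ _ _ H1 H2).
  by move=> x y z a b; apply: leq_trans b a.
  by move=> x y /andP[a b]; apply/eqP; rewrite eqn_leq; apply/andP; split.
by apply/allP => x _; rewrite /= Hc.
Qed.

Lemma sorted_sortg s : sorted geq (sort geq s).
Proof. by apply: sort_sorted => x y; exact: leq_total. Qed.

Lemma count_sort x s : count_mem x (sort geq s) = count_mem x s.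
Proof. by apply/permP; rewrite perm_sort. Qed.

Lemma sumn_sort s : sumn (sort geq s) = sumn s.
Proof. by apply: perm_sumn; rewrite perm_sort. Qed.

Lemma count_le_sumn x s : count_mem x s * x <= sumn s.
Proof.
elim: s => //= y s IH; rewrite mulnDl; case: eqP => [->|_]; last by rewrite mul0n add0n; apply: leq_trans IH (leq_addl _ _).
by rewrite mul1n leq_add2l.
Qed.

Section R.
Variable r : nat.
Hypothesis hr : 1 < r.

Fixpoint vr (f k : nat) : nat :=
  if f is f'.+1 then (if (0 < k) && (r %| k) then (vr f' (k %/ r)).+1 else 0) else 0.
Definition v k := vr k k.
Definition core k := k %/ r ^ v k.

Lemma r_gt0 : 0 < r. Proof. exact: ltnW. Qed.

Lemma vr_pow f b i : 0 < b -> ~~ (r %| b) -> b * r ^ i <= f -> vr f (b * r ^ i) = i.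
Proof.
move=> b0 nb; elim: i f => [|i IH] [|f] /=.
- by rewrite expn0 muln1 leqn0 => /eqP E; rewrite E in b0.
- by rewrite expn0 muln1 (negbTE nb) andbF.
- by rewrite leqn0 muln_eq0 expn_eq0 => /orP[/eqP E|/andP[/eqP E _]]; [rewrite E in b0|move: hr; rewrite E].
move=> Hf; have pos : 0 < b * r ^ i.+1 by rewrite muln_gt0 b0 expn_gt0 r_gt0.
rewrite pos expnSr mulnA dvdn_mull // mulnK ?r_gt0 // IH //.
rewrite -ltnS; apply: leq_trans Hf; rewrite expnSr mulnA -[X in X < _]muln1 ltn_mul2l ?hr andbT.
by rewrite muln_gt0 b0 expn_gt0 r_gt0.
Qed.

Lemma v_pow b i : 0 < b -> ~~ (r %| b) -> v (b * r ^ i) = i.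
Proof. by move=> b0 nb; rewrite /v vr_pow. Qed.

Lemma core_pow b i : 0 < b -> ~~ (r %| b) -> core (b * r ^ i) = b.
Proof. by move=> b0 nb; rewrite /core v_pow // mulnK // expn_gt0 r_gt0. Qed.

Lemma vr_spec f k : 0 < k -> k <= f -> (r ^ vr f k %| k) && ~~ (r %| k %/ r ^ vr f k).
Proof.
elim: f k => [|f IH] k k0 /=; first by rewrite leqn0 => /eqP E; rewrite E in k0.
move=> kf; rewrite k0 /=; case: ifP => Hd; last by rewrite expn0 dvd1n divn1 Hd.
have [q Eq] : exists q, k = q * r by exists (k %/ r); rewrite divnK.
have q0 : 0 < q by move: k0; rewrite Eq muln_gt0 => /andP[].
have qf : q <= f.
  rewrite -ltnS; apply: leq_trans kf; rewrite Eq -[X in X < _]muln1 ltn_mul2l q0 /=; exact: hr.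
rewrite Eq mulnK ?r_gt0 //; case/andP: (IH q q0 qf) => H1 H2.
by rewrite expnSr dvdn_pmul2r ?r_gt0 // H1 /= divnMr ?r_gt0.
Qed.

Lemma core_spec k : 0 < k -> [/\ k = core k * r ^ v k, ~~ (r %| core k) & 0 < core k].
Proof.
move=> k0; case/andP: (vr_spec k0 (leqnn k)) => H1 H2.
have E : k = core k * r ^ v k by rewrite /core /v divnK.
split => //; by move: k0; rewrite {1}E muln_gt0 => /andP[].
Qed.

End R.

Lemma perm_of_count (s1 s2 : seq nat) : (forall x, count_mem x s1 = count_mem x s2) -> perm_eq s1 s2.
Proof. by move=> Hc; apply/allP => x _; rewrite /= Hc. Qed.

Lemma mem_count (x : nat) s : (x \in s) = (0 < count_mem x s).
Proof. by rewrite -has_pred1 has_count. Qed.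

Section R2.
Variable r : nat.
Hypothesis hr : 1 < r.
Local Notation v := (v r).
Local Notation core := (core r).

Definition psi t := flatten [seq nseq (r ^ v k) (core k) | k <- t].

Lemma count_psi_gen x t : count_mem x (psi t) = sumn [seq (core k == x) * r ^ v k | k <- t].
Proof. by elim: t => //= k t IH; rewrite count_cat count_nseq IH. Qed.

Lemma sumn_psi t : all (fun x => 0 < x) t -> sumn (psi t) = sumn t.
Proof.
elim: t => //= k t IH /andP[k0 Ht]; rewrite sumn_cat sumn_nseq IH //.
by case: (core_spec hr k0) => E _ _; rewrite {3}E.
Qed.

Lemma count_psi_bad x t : all (fun x => 0 < x) t -> (x == 0) || (r %| x) -> count_mem x (psi t) = 0.
Proof.
move=> Ht Hx; rewrite count_psi_gen; elim: t Ht => //= k t IH /andP[k0 Ht]; rewrite IH //.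
case: (core_spec hr k0) => _ H1 H2; case: eqP => //= E; subst x.
by move: Hx; rewrite (negbTE H1) orbF => /eqP E; rewrite E in H2.
Qed.

Lemma term_eq K x k : 0 < x -> ~~ (r %| x) -> 0 < k -> k < r ^ K ->
  \sum_(j < K) (k == x * r ^ j) * r ^ j = (core k == x) * r ^ v k.
Proof.
move=> x0 nx k0 kK; case: (core_spec hr k0) => Ek _ _.
have Hj j : (k == x * r ^ j) = (core k == x) && (j == v k).
  apply/eqP/andP => [->|[/eqP E1 /eqP E2]]; first by rewrite core_pow // v_pow.
  by rewrite Ek E1 E2.
case: eqP => Ec; last by rewrite big1 // => j _; rewrite Hj; case: eqP.
have vK : v k < K.
  rewrite -(ltn_exp2l _ _ hr); apply: leq_trans kK; rewrite ltnS {2}Ek leq_pmull //.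
  by case: (core_spec hr k0).
rewrite (bigD1 (Ordinal vK)) //= Hj eqxx Ec eqxx mul1n big1 ?addn0 //.
by move=> j /eqP Hne; rewrite Hj Ec eqxx /=; case: eqP => // E; case: Hne; apply: val_inj.
Qed.

Lemma count_psi x K t : 0 < x -> ~~ (r %| x) -> all (fun k => 0 < k < r ^ K) t ->
  count_mem x (psi t) = \sum_(j < K) count_mem (x * r ^ j) t * r ^ j.
Proof.
move=> x0 nx; rewrite count_psi_gen; elim: t => [|k t IH] /=; first by rewrite big1.
case/andP=> /andP[k0 kK] Ht; rewrite IH // -(@term_eq K) // -big_split /=.
by apply: eq_bigr => j _; rewrite mulnDl.
Qed.

Definition digit i c := c %/ r ^ i %% r.

Lemma digit_expand K c : c = \sum_(j < K) digit j c * r ^ j + r ^ K * (c %/ r ^ K).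
Proof.
elim: K => [|K IH]; first by rewrite big_ord0 expn0 mul1n divn1.
rewrite big_ord_recr /= -addnA {1}IH; congr (_ + _).
rewrite {1}(divn_eq (c %/ r ^ K) r) mulnDr /digit expnSr -divnMA addnC.
by congr (_ + _); [rewrite mulnC | rewrite -mulnA (mulnC (c %/ _))].
Qed.

Lemma digit_sum K c : c < r ^ K -> \sum_(j < K) digit j c * r ^ j = c.
Proof. by move=> cK; rewrite {2}(digit_expand K c) divn_small // muln0 addn0. Qed.

Lemma digit_lt i c : digit i c < r.
Proof. by rewrite ltn_pmod // ltnW. Qed.

Lemma digits_uniq K (a b : nat -> nat) : (forall j, a j < r) -> (forall j, b j < r) ->
  \sum_(j < K) a j * r ^ j = \sum_(j < K) b j * r ^ j -> forall j, j < K -> a j = b j.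
Proof.
elim: K a b => [//|K IH] a b Ha Hb.
rewrite !big_ord_recl /= !expn0 !muln1.
have Hs (c : nat -> nat) : \sum_(i < K) c (bump 0 i) * r ^ (bump 0 i) = r * \sum_(i < K) c i.+1 * r ^ i.
  by rewrite big_distrr; apply: eq_bigr => i _ /=; rewrite expnS mulnCA.
rewrite !Hs => E.
have E0 : a 0 = b 0.
  by move: (congr1 (modn^~ r) E); rewrite !(addnC (a 0)) !(addnC (b 0)) !(mulnC r) !modnMDl !modn_small.
have E1 : \sum_(i < K) a i.+1 * r ^ i = \sum_(i < K) b i.+1 * r ^ i.
  move: (congr1 (divn^~ r) E); rewrite !(addnC (a 0)) !(addnC (b 0)) !(mulnC r) !divnMDl ?(ltnW hr) //.
  by rewrite !divn_small // !addn0.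
by case=> [|j] // jK; apply: (IH (fun i => a i.+1) (fun i => b i.+1)).
Qed.

Definition phi s := flatten [seq nseq (digit (v k) (count_mem (core k) s)) k | k <- iota 1 (sumn s)].

Lemma count_iota_flat (c : nat -> nat) x a K :
  count_mem x (flatten [seq nseq (c k) k | k <- iota a K]) = if a <= x < a + K then c x else 0.
Proof.
elim: K a => [|K IH] a /=; first by rewrite addn0; case: (leqP a x) => // /leq_ltn_trans H; rewrite ltnNge.
rewrite count_cat count_nseq IH /=; case: (eqVneq a x) => [->|ne].
  by rewrite leqnn ltnn /= addnS ltnS leq_addr mul1n addn0.
by rewrite mul0n add0n addSnnS ltn_neqAle ne.
Qed.

Lemma count_phi0 s : count_mem 0 (phi s) = 0.
Proof. by rewrite count_iota_flat. Qed.

Lemma count_phi x s : 0 < x -> count_mem x (phi s) = digit (v x) (count_mem (core x) s).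
Proof.
move=> x0; rewrite count_iota_flat x0 add1n ltnS /=; case: leqP => // Hx.
case: (core_spec hr x0) => Ex _ c0.
rewrite /digit divn_small ?mod0n //.
have H1 := count_le_sumn (core x) s.
rewrite -(ltn_pmul2r c0); apply: leq_ltn_trans H1 _; rewrite mulnC -Ex; exact: Hx.
Qed.

Lemma phi_pos s : all (fun x => 0 < x) (phi s).
Proof. by rewrite pos_count0 count_phi0. Qed.

Lemma phi_lt s x : count_mem x (phi s) < r.
Proof. by case: x => [|x]; rewrite ?count_phi0 ?(ltnW hr) // count_phi // digit_lt. Qed.

Lemma psi_phi s : all (fun x => 0 < x) s -> (forall x, r %| x -> count_mem x s = 0) ->
  forall x, count_mem x (psi (phi s)) = count_mem x s.
Proof.
move=> Hs Hd x; case: (boolP ((x == 0) || (r %| x))) => Hx.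
  rewrite count_psi_bad ?phi_pos //; case/orP: Hx => [/eqP ->|/Hd //].
  by move: Hs; rewrite pos_count0 => /eqP.
move: Hx; rewrite negb_or => /andP[]; rewrite -lt0n => x0 nx.
rewrite (@count_psi _ (sumn s).+1) //; last first.
  apply/allP => k; rewrite mem_count count_iota_flat.
  case: ifP => // /andP[k0 ks] _; rewrite k0 /=; apply: leq_trans ks _.
  by rewrite add1n ltnW // ltn_expl.
rewrite -[RHS](@digit_sum (sumn s).+1); last first.
  apply: leq_ltn_trans (ltn_expl _ hr); apply: leq_trans (leqnSn _).
  apply: leq_trans (count_le_sumn x s); by rewrite leq_pmulr.
apply: eq_bigr => j _; rewrite count_phi ?muln_gt0 ?x0 ?expn_gt0 ?(ltnW hr) //.
by rewrite v_pow // core_pow.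
Qed.

Lemma psi_inj t1 t2 : all (fun x => 0 < x) t1 -> all (fun x => 0 < x) t2 ->
  (forall x, count_mem x t1 < r) -> (forall x, count_mem x t2 < r) ->
  (forall x, count_mem x (psi t1) = count_mem x (psi t2)) ->
  forall k, count_mem k t1 = count_mem k t2.
Proof.
move=> H1 H2 L1 L2 E [|k]; first by move: H1 H2; rewrite !pos_count0 => /eqP -> /eqP ->.
case: (core_spec hr (ltn0Sn k)) => Ek nc c0.
set K := (k.+1 + sumn t1 + sumn t2).+1.
have bnd t : sumn t < K -> all (fun x => 0 < x) t -> all (fun x => 0 < x < r ^ K) t.
  move=> HK Ht; apply/allP => y yt; rewrite (allP Ht) //=; apply: leq_trans (ltnW (ltn_expl _ hr)).
  apply: leq_ltn_trans HK; have := count_le_sumn y t; rewrite mem_count in yt.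
  by apply: leq_trans; rewrite leq_pmull.
have := E (core k.+1); rewrite (@count_psi _ K t1) ?(@count_psi _ K t2) //; last first.
  by apply: bnd => //; rewrite /K ltnS; lia.
  by apply: bnd => //; rewrite /K ltnS; lia.
move/(@digits_uniq K (fun j => count_mem (core k.+1 * r ^ j) t1) (fun j => count_mem (core k.+1 * r ^ j) t2) (fun j => L1 _) (fun j => L2 _)) => D.
have vK : v k.+1 < K.
  apply: leq_trans (ltn_expl _ hr) _; apply: (@leq_trans k.+1); last by rewrite /K; lia.
  by rewrite {2}Ek leq_pmull.
by rewrite Ek; apply: D.
Qed.

End R2.

Lemma undup_eq1 (s : seq nat) w : (undup s == [:: w]) = (w \in s) && all (pred1 w) s.
Proof.
apply/eqP/andP => [E|[ws /all_pred1P E]].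
  split; first by rewrite -mem_undup E inE.
  by apply/allP => y; rewrite -mem_undup E inE.
rewrite E; move: ws; rewrite E; case: (size s) => [|n] //= _.
by elim: n => //= n IH; rewrite inE eqxx.
Qed.

Lemma divmod_uniq r a b m1 m2 : 0 < r -> a < r -> b < r -> a + r * m1 = b + r * m2 -> a = b /\ m1 = m2.
Proof.
move=> r0 ar br E.
have E0 : a = b.
  by move: (congr1 (modn^~ r) E); rewrite !(addnC a) !(addnC b) !(mulnC r) !modnMDl !modn_small.
split => //; move: (congr1 (divn^~ r) E); rewrite !(addnC a) !(addnC b) !(mulnC r) !divnMDl //.
by rewrite !divn_small // !addn0.
Qed.

Section Main.
Variables r u : nat.
Hypothesis hr : 1 < r.
Hypothesis hu : 0 < u.

Lemma r0 : 0 < r. Proof. exact: ltnW. Qed.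

Lemma inD_iff s : inD r u s <-> r <= count_mem u s /\ forall x, x != u -> count_mem x s < r.
Proof.
rewrite /inD undup_eq1 mem_filter; split.
  case/andP=> /andP[H1 _] /allP H2; split => // x xu; rewrite ltnNge; apply/negP => Hx.
  have : x \in [seq y <- s | r <= count_mem y s].
    by rewrite mem_filter Hx mem_count; apply: leq_trans Hx; exact: r0.
  by move/H2 => /= /eqP E; move: xu; rewrite E eqxx.
case=> H1 H2; rewrite H1 mem_count (leq_trans r0 H1) /=; apply/allP => x.
rewrite mem_filter => /andP[Hx _] /=; apply/eqP; apply/eqP; case: eqP => // /eqP ne.
by move: (H2 _ ne); rewrite ltnNge Hx.
Qed.

Definition wO s := head 0 (undup [seq x <- s | r %| x]).

Lemma inO_spec s : inO r u s ->
  [/\ r %| wO s, count_mem (wO s) s = u & forall x, r %| x -> x != wO s -> count_mem x s = 0].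
Proof.
rewrite /inO -/(wO s); case/andP => /eqP Hs /eqP Hc.
have E : undup [seq x <- s | r %| x] = [:: wO s].
  by rewrite /wO; case: (undup _) Hs => [|a [|b l]].
move/eqP: E; rewrite undup_eq1 mem_filter => /andP[/andP[Hw _] /allP Ha]; split => // x rx xw.
apply/eqP; rewrite -leqn0 leqNgt -mem_count; apply/negP => xs.
by have := Ha x; rewrite mem_filter rx xs /= => /(_ isT) /eqP E; move: xw; rewrite E eqxx.
Qed.

Lemma inO_intro s w : r %| w -> count_mem w s = u -> (forall x, r %| x -> x != w -> count_mem x s = 0) ->
  inO r u s.
Proof.
move=> rw cw H; rewrite /inO.
have -> : undup [seq x <- s | r %| x] = [:: w].
  apply/eqP; rewrite undup_eq1 mem_filter rw mem_count cw hu /=; apply/allP => x.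
  rewrite mem_filter => /andP[rx xs] /=; apply/negPn/negP => xw.
  by move: xs; rewrite mem_count H.
by rewrite /= cw !eqxx.
Qed.

Definition F s := sort geq (phi r [seq x <- s | ~~ (r %| x)] ++ nseq (r * (wO s %/ r)) u).

Definition G t := sort geq (psi r ([seq x <- t | x != u] ++ nseq (count_mem u t %% r) u)
   ++ nseq u (r * (count_mem u t %/ r))).

Lemma count_psi_perm t1 t2 : (forall x, count_mem x t1 = count_mem x t2) ->
  forall x, count_mem x (psi r t1) = count_mem x (psi r t2).
Proof.
move=> H x; rewrite !count_psi_gen; apply: perm_sumn; apply: perm_map; exact: perm_of_count.
Qed.

Lemma sumn_phi s : all (fun x => 0 < x) s -> (forall x, r %| x -> count_mem x s = 0) ->
  sumn (phi r s) = sumn s.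
Proof.
move=> H1 H2; rewrite -(sumn_psi hr (phi_pos r s)); apply: perm_sumn; apply: perm_of_count.
exact: psi_phi.
Qed.

Lemma O_decomp s : is_partition (sumn s) s -> inO r u s ->
  let w := wO s in let s' := [seq x <- s | ~~ (r %| x)] in
  [/\ forall x, count_mem x s = if r %| x then (if x == w then u else 0) else count_mem x s',
      sumn s = sumn s' + u * w, 0 < w %/ r, w = r * (w %/ r) &
      all (fun x => 0 < x) s' /\ (forall x, r %| x -> count_mem x s' = 0)].
Proof.
move=> Hp /inO_spec [rw cw H] w s'; case/and3P: Hp => _ Hpos _.
have Hc x : count_mem x s = if r %| x then (if x == w then u else 0) else count_mem x s'.
  rewrite /s' count_mem_filter; case: ifP => rx; rewrite ?rx //=; case: (eqVneq x w) => [->//|ne].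
  exact: H.
have w0 : 0 < w.
  have : w \in s by rewrite mem_count cw.
  by move/(allP Hpos).
have Ew : w = r * (w %/ r) by rewrite mulnC divnK.
split => //.
- have : perm_eq s (s' ++ nseq u w).
    apply: perm_of_count => x; rewrite count_cat count_nseq Hc /s' count_mem_filter /=.
    case: (eqVneq x w) => [->|ne]; first by rewrite rw /= ?eqxx mul1n.
    by rewrite mul0n addn0; case: (r %| x).
  by move/perm_sumn ->; rewrite sumn_cat sumn_nseq mulnC.
- by move: w0; rewrite {1}Ew muln_gt0 => /andP[].
- split; first by rewrite pos_count0 /s' count_mem_filter /=; move: Hpos; rewrite pos_count0 => /eqP ->; case: ifP.
  by move=> x rx; rewrite /s' count_mem_filter rx.
Qed.

Lemma F_ok n s : is_partition n s -> inO r u s -> is_partition n (F s) && inD r u (F s).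
Proof.
move=> Hp HO; have Hn : n = sumn s by case/and3P: Hp => _ _ /eqP.
subst n; case: (O_decomp Hp HO) => Hc Hsum m0 Ew [s'pos s'nd].
set w := wO s in Hc Hsum m0 Ew *; set s' := filter _ s in Hc Hsum s'pos s'nd *.
have cF x : count_mem x (F s) = count_mem x (phi r s') + (x == u) * (r * (w %/ r)).
  by rewrite /F count_sort count_cat count_nseq /= eq_sym.
apply/andP; split.
  have SF : sorted geq (F s) by exact: sorted_sortg.
  rewrite /is_partition SF pos_count0 cF count_phi0 /=.
  rewrite (eq_sym 0 u) (gtn_eqF hu) mul0n /=.
  rewrite /F sumn_sort sumn_cat sumn_nseq sumn_phi // Hsum -Ew mulnC eqxx //.
apply/inD_iff; split; first by rewrite cF eqxx mul1n; apply: leq_trans (leq_addl _ _); rewrite leq_pmulr.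
by move=> x xu; rewrite cF (negbTE xu) mul0n addn0 phi_lt.
Qed.

Lemma F_inj n s1 s2 : is_partition n s1 -> inO r u s1 -> is_partition n s2 -> inO r u s2 ->
  F s1 = F s2 -> s1 = s2.
Proof.
move=> Hp1 HO1 Hp2 HO2 E.
have Hn1 : n = sumn s1 by case/and3P: Hp1 => _ _ /eqP.
have Hn2 : n = sumn s2 by case/and3P: Hp2 => _ _ /eqP.
rewrite Hn1 in Hp1; rewrite Hn2 in Hp2.
case: (O_decomp Hp1 HO1) => Hc1 _ _ Ew1 [p1 d1].
case: (O_decomp Hp2 HO2) => Hc2 _ _ Ew2 [p2 d2].
set w1 := wO s1 in Hc1 Ew1 E *; set s'1 := filter _ s1 in Hc1 p1 d1 E *.
set w2 := wO s2 in Hc2 Ew2 E *; set s'2 := filter _ s2 in Hc2 p2 d2 E *.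
have cE x : count_mem x (phi r s'1) + (x == u) * (r * (w1 %/ r)) =
            count_mem x (phi r s'2) + (x == u) * (r * (w2 %/ r)).
  by move: (congr1 (count_mem x) E); rewrite /F !count_sort !count_cat !count_nseq /= !(eq_sym u x).
have [Eu Em] : count_mem u (phi r s'1) = count_mem u (phi r s'2) /\ w1 %/ r = w2 %/ r.
  by apply: (@divmod_uniq r); rewrite ?r0 ?phi_lt //; move: (cE u); rewrite eqxx !mul1n.
have Ew : w1 = w2 by rewrite Ew1 Ew2 Em.
have Ephi x : count_mem x (phi r s'1) = count_mem x (phi r s'2).
  case: (eqVneq x u) => [->//|xu]; by move: (cE x); rewrite (negbTE xu) !mul0n !addn0.
have Es' x : count_mem x s'1 = count_mem x s'2.
  by rewrite -(psi_phi hr p1 d1) -(psi_phi hr p2 d2); apply: count_psi_perm.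
case/and3P: Hp1 => S1 _ _; case/and3P: Hp2 => S2 _ _.
by apply: eq_part => // x; rewrite Hc1 Hc2 Ew Es'.
Qed.

Lemma D_decomp t : is_partition (sumn t) t -> inD r u t ->
  let c := count_mem u t in let t' := [seq x <- t | x != u] ++ nseq (c %% r) u in
  [/\ forall x, count_mem x t' = if x == u then c %% r else count_mem x t,
      sumn t = sumn t' + r * (c %/ r) * u, 0 < c %/ r,
      all (fun x => 0 < x) t' & forall x, count_mem x t' < r].
Proof.
move=> Hp /inD_iff [Hu Ho] c t'; case/and3P: Hp => _ Hpos _.
have Hc x : count_mem x t' = if x == u then c %% r else count_mem x t.
  rewrite /t' count_cat count_mem_filter count_nseq /=.
  by rewrite (eq_sym u x); case: eqP => [->|_] /=; rewrite ?mul1n ?mul0n ?addn0.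
split => //.
- have : perm_eq t (t' ++ nseq (r * (c %/ r)) u).
    apply: perm_of_count => x; rewrite count_cat count_nseq Hc /= (eq_sym u x).
    case: eqP => [->|_]; last by rewrite mul0n addn0.
    by rewrite mul1n addnC mulnC -divn_eq.
  by move/perm_sumn ->; rewrite sumn_cat sumn_nseq mulnC.
- by rewrite divn_gt0 ?r0.
- rewrite pos_count0 Hc (eq_sym 0 u) (gtn_eqF hu).
  by move: Hpos; rewrite pos_count0.
- by move=> x; rewrite Hc; case: eqP => [_|/eqP]; [rewrite ltn_pmod ?r0 | apply: Ho].
Qed.

Lemma G_ok n t : is_partition n t -> inD r u t -> is_partition n (G t) && inO r u (G t).
Proof.
move=> Hp HD; have Hn : n = sumn t by case/and3P: Hp => _ _ /eqP.
subst n; case: (D_decomp Hp HD) => Hc Hsum m0 tpos tlt.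
set c := count_mem u t in Hc Hsum m0 *; set t' := cat _ _ in Hc Hsum tpos tlt *.
have cG x : count_mem x (G t) = count_mem x (psi r t') + (x == r * (c %/ r)) * u.
  by rewrite /G count_sort count_cat count_nseq /= eq_sym.
apply/andP; split.
  have SG : sorted geq (G t) by exact: sorted_sortg.
  rewrite /is_partition SG pos_count0 cG count_psi_bad ?eqxx //= .
  rewrite (eq_sym 0) (gtn_eqF (_ : 0 < r * (c %/ r))) ?muln_gt0 ?r0 // mul0n /=.
  rewrite /G sumn_sort sumn_cat sumn_nseq sumn_psi // Hsum mulnC eqxx //.
apply: (@inO_intro _ (r * (c %/ r))); first exact: dvdn_mulr.
  by rewrite cG count_psi_bad ?dvdn_mulr ?orbT // eqxx mul1n.
by move=> x rx xw; rewrite cG count_psi_bad ?rx ?orbT // (negbTE xw).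
Qed.

Lemma G_inj n t1 t2 : is_partition n t1 -> inD r u t1 -> is_partition n t2 -> inD r u t2 ->
  G t1 = G t2 -> t1 = t2.
Proof.
move=> Hp1 HD1 Hp2 HD2 E.
have Hn1 : n = sumn t1 by case/and3P: Hp1 => _ _ /eqP.
have Hn2 : n = sumn t2 by case/and3P: Hp2 => _ _ /eqP.
rewrite Hn1 in Hp1; rewrite Hn2 in Hp2.
case: (D_decomp Hp1 HD1) => Hc1 _ _ p1 l1.
case: (D_decomp Hp2 HD2) => Hc2 _ _ p2 l2.
set c1 := count_mem u t1 in Hc1 E *; set t'1 := cat _ _ in Hc1 p1 l1 E *.
set c2 := count_mem u t2 in Hc2 E *; set t'2 := cat _ _ in Hc2 p2 l2 E *.
have cE x : count_mem x (psi r t'1) + (x == r * (c1 %/ r)) * u =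
            count_mem x (psi r t'2) + (x == r * (c2 %/ r)) * u.
  by move: (congr1 (count_mem x) E); rewrite /G !count_sort !count_cat !count_nseq /= !(eq_sym _ x).
have Em : r * (c1 %/ r) = r * (c2 %/ r).
  move: (cE (r * (c1 %/ r))); rewrite !count_psi_bad ?dvdn_mulr ?orbT // eqxx mul1n !add0n.
  by case: eqP => // _; rewrite mul0n => E0; have := hu; rewrite E0.
have Epsi x : count_mem x (psi r t'1) = count_mem x (psi r t'2).
  by move: (cE x); rewrite Em => /addIn.
have Et' := psi_inj hr p1 p2 l1 l2 Epsi.
have Ec : c1 = c2.
  rewrite (divn_eq c1 r) (divn_eq c2 r); move: (Et' u); rewrite Hc1 Hc2 eqxx => ->.
  by congr (_ + _); rewrite mulnC Em mulnC.
case/and3P: Hp1 => S1 _ _; case/and3P: Hp2 => S2 _ _.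
apply: eq_part => // x; case: (eqVneq x u) => [->|xu]; first exact: Ec.
by move: (Et' x); rewrite Hc1 Hc2 (negbTE xu).
Qed.

End Main.

Theorem theorem1 (u r n : nat) (hu : 1 <= u) (hr : 2 <= r) :
  alpha r u n = beta r u n.
Proof.
rewrite /alpha /beta; apply/eqP; rewrite eqn_leq; apply/andP; split.
  apply: (@npart_leq n n (inO r u) (inD r u) (F r u)); first exact: (F_ok hr hu).
  by move=> s1 s2 H1 H2 H3 H4; exact: (F_inj hr hu H1 H2 H3 H4).
apply: (@npart_leq n n (inD r u) (inO r u) (G r u)); first exact: (G_ok hr hu).
by move=> s1 s2 H1 H2 H3 H4; exact: (G_inj hr hu H1 H2 H3 H4).
Qed.
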